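(* Let $\kappa>0$ and let $S$ be a $\kappa$-cylindrical surface whose directrix $(x,z)$ is given by the solution of $x'=\cos\theta$, $z'=\sin\theta$, $\theta'=\kappa z$ with $x(0)=0$, $\theta(0)=0$, $z(0)=z_0>0$ (so $z_0$ is the lowest height of $S$ above $\Pi=\{z=0\}$). Then the height $z$ satisfies $$z_0\le z(p)\le\sqrt{\frac4\kappa+z_0^2}\qquad\text{for all }p\in S,$$ and both bounds are attained.
   Context: A $\kappa$-cylindrical surface ($\kappa\ne0$ constant) is a cylindrical ruled surface in $\mathbb R^3$ locally satisfying $\operatorname{div}\big(Du/\sqrt{1+|Du|^2}\big)=\kappa u$; it has horizontal rulings and is parametrized as $(x(s),t,z(s))$ with arc-length directrix $(x,z)$ and $\theta$ the angle between $\partial/\partial x$ and the directrix, satisfying the system above. *)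

(* Defs.v *)
From Stdlib Require Import Reals.
From Coquelicot Require Import Coquelicot.
Open Scope R_scope.

(* The solution exists on all of R
   (right-hand side is smooth with |x'|,|z'| <= 1, theta' linear in z) and is
   unique, so quantifying over global solutions is faithful. *)
Definition directrix_solution (kappa z0 : R) (x z th : R -> R) : Prop :=
  (forall s, is_derive x s (cos (th s))) /\
  (forall s, is_derive z s (sin (th s))) /\
  (forall s, is_derive th s (kappa * z s)) /\
  x 0 = 0 /\ th 0 = 0 /\ z 0 = z0.

Definition cyl_surface (x z : R -> R) (p : R * R * R) : Prop :=
  exists s t, p = (x s, t, z s).

Definition height (p : R * R * R) : R := snd p.

(* Main.v *)
Require Import Defs.
From Stdlib Require Import Reals Lra.
From Coquelicot Require Import Coquelicot.
Open Scope R_scope.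
Lemma consD (kappa : R) (z th : R -> R) s :
  (forall s, is_derive z s (sin (th s))) ->
  (forall s, is_derive th s (kappa * z s)) ->
  is_derive (fun s => kappa * (z s ^ 2) + 2 * cos (th s)) s 0.
Proof.
intros Hz Ht.
assert (H1 := is_derive_scal (fun s => z s ^ 2) s kappa _ (is_derive_pow z 2 s _ (Hz s))).
assert (H2 := is_derive_comp cos th s _ _ (is_derive_cos (th s)) (Ht s)).
assert (H3 := is_derive_scal _ s 2 _ H2).
assert (H := is_derive_plus _ _ s _ _ H1 H3).
simpl in H. unfold plus, scal, mult in H; simpl in H. unfold mult in H; simpl in H.
eapply is_derive_ext. 2: { replace 0 with (kappa * (2 * sin (th s) * (z s * 1)) + 2 * (kappa * z s * - sin (th s))) by ring. exact H. }
intros t; simpl; reflexivity.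
Qed.

Lemma contD (f df : R -> R) : (forall s, is_derive f s (df s)) -> continuity f.
Proof. intros H x. apply continuity_pt_filterlim. apply (ex_derive_continuous f x).
exists (df x); apply H. Qed.

Lemma cons (kappa z0 : R) (z th : R -> R) :
  (forall s, is_derive z s (sin (th s))) ->
  (forall s, is_derive th s (kappa * z s)) -> th 0 = 0 -> z 0 = z0 ->
  forall s, kappa * (z s ^ 2) + 2 * cos (th s) = kappa * z0 ^ 2 + 2.
Proof.
intros Hz Ht H0 Hz0 s.
destruct (MVT_gen (fun s => kappa * (z s ^ 2) + 2 * cos (th s)) 0 s (fun _ => 0)) as [c [_ Hc]].
- intros; apply consD; auto.
- intros; apply (contD _ (fun _ => 0)); intros; apply consD; auto.
- simpl in Hc. rewrite H0, Hz0, cos_0 in Hc. lra.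
Qed.

Theorem mainTheorem5 (kappa z0 : R) (x z th : R -> R) :
  0 < kappa -> 0 < z0 ->
  directrix_solution kappa z0 x z th ->
  (forall p, cyl_surface x z p ->
     z0 <= height p <= sqrt (4 / kappa + z0 ^ 2)) /\
  (exists p, cyl_surface x z p /\ height p = z0) /\
  (exists p, cyl_surface x z p /\ height p = sqrt (4 / kappa + z0 ^ 2)).
Proof.
intros Hk Hz0 [Hx [Hz [Ht [Hx0 [Ht0 Hzz]]]]].
assert (C := cons kappa z0 z th Hz Ht Ht0 Hzz).
assert (Hsq : forall s, z0 ^ 2 <= z s ^ 2 <= z0 ^ 2 + 4 / kappa).
{ intros s. specialize (C s). pose proof (COS_bound (th s)).
  assert (z s ^ 2 = z0 ^ 2 + (2 - 2 * cos (th s)) / kappa) by (field_simplify_eq; lra).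
  rewrite H0. split.
  - assert (0 <= (2 - 2 * cos (th s)) / kappa) by (apply Rdiv_le_0_compat; lra). lra.
  - assert ((2 - 2 * cos (th s)) / kappa <= 4 / kappa) by (apply Rmult_le_compat_r; [apply Rlt_le, Rinv_0_lt_compat; lra | lra]). lra. }
assert (Hpos : forall s, 0 < z s).
{ intros s. destruct (Rlt_or_le 0 (z s)) as [h|h]; auto. exfalso.
  destruct (IVT_gen z 0 s 0 (contD z _ Hz)) as [c [_ Hc]].
  { rewrite Hzz. unfold Rmin, Rmax. destruct (Rle_dec z0 (z s)); lra. }
  specialize (Hsq c). rewrite Hc in Hsq. nra. }
assert (Hb : forall s, z0 <= z s <= sqrt (z0 ^ 2 + 4 / kappa)).
{ intros s. specialize (Hsq s). specialize (Hpos s). split. nra.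
  rewrite <- (sqrt_pow2 (z s)) by lra. apply sqrt_le_1_alt. lra. }
set (s1 := PI / (kappa * z0)).
assert (Hs1 : 0 < s1) by (unfold s1; apply Rdiv_lt_0_compat; [apply PI_RGT_0 | nra]).
assert (Hth : PI <= th s1).
{ destruct (MVT_gen th 0 s1 (fun s => kappa * z s)) as [c [_ Hc]].
  - intros; apply Ht.
  - intros; apply (contD th _ Ht).
  - rewrite Ht0 in Hc. specialize (Hb c).
    assert (PI = kappa * z0 * s1) by (unfold s1; field; nra).
    assert (kappa * z0 * s1 <= kappa * z c * s1). { apply Rmult_le_compat_r; nra. } nra. }
destruct (IVT_gen th 0 s1 PI (contD th _ Ht)) as [c [_ Hc]].
{ rewrite Ht0. pose proof PI_RGT_0. unfold Rmin, Rmax. destruct (Rle_dec 0 (th s1)); lra. }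
assert (Hzc : z c = sqrt (z0 ^ 2 + 4 / kappa)).
{ specialize (C c). rewrite Hc, cos_PI in C. rewrite <- (sqrt_pow2 (z c)) by (specialize (Hpos c); lra).
  f_equal. apply (Rmult_eq_reg_l kappa). 2: lra. field_simplify; lra. }
rewrite Rplus_comm.
split; [|split].
- intros p [s [t ->]]. simpl. apply Hb.
- exists (x 0, 0, z 0). split. exists 0, 0. reflexivity. simpl. exact Hzz.
- exists (x c, 0, z c). split. exists c, 0. reflexivity. simpl. exact Hzc.
Qed.
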